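(* There is no well-behaved real-measure of $\mathbb N^{\mathbb N}$; that is, there is no function $F:\mathbb N^{\mathbb N}\to\mathbb R$ such that (1) for all $f,g:\mathbb N\to\mathbb N$, $f\succ g$ implies $F(f)>F(g)$, and (2) for every $r\in\mathbb R$ there is $f:\mathbb N\to\mathbb N$ with $F(f)>r$.
   Context: $\mathbb N^{\mathbb N}$ denotes the set of all functions $\mathbb N\to\mathbb N$. For $f,g:\mathbb N\to\mathbb N$, write $f\succ g$ if there is $n_0\in\mathbb N$ with $f(n)>g(n)$ for all $n>n_0$. *)

(* Defs.v *)
From Stdlib Require Import Reals.
Open Scope R_scope.

Definition eventually_dominates (f g : nat -> nat) : Prop :=
  exists n0 : nat, forall n : nat, (n > n0)%nat -> (f n > g n)%nat.

(* Main.v *)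
Require Import Defs.
From Stdlib Require Import Reals Lia Lra ClassicalEpsilon.
Open Scope R_scope.

Fixpoint sumk (fs : nat -> nat -> nat) (m k : nat) : nat :=
  match k with O => fs O m | S k' => (sumk fs m k' + fs k m)%nat end.

Lemma sumk_ge fs m k j : (j <= k)%nat -> (fs j m <= sumk fs m k)%nat.
Proof.
  induction k; intros H; simpl.
  - assert (j = 0%nat) by lia; subst; lia.
  - destruct (Nat.eq_dec j (S k)); [subst; lia|]. specialize (IHk ltac:(lia)). lia.
Qed.

Theorem mainTheorem7 :
  ~ exists F : (nat -> nat) -> R,
      (forall f g : nat -> nat, eventually_dominates f g -> F f > F g) /\
      (forall r : R, exists f : nat -> nat, F f > r).
Proof.
  intros [F [H1 H2]].
  set (fs := fun n : nat => proj1_sig (constructive_indefinite_description _ (H2 (INR n)))).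
  assert (Hfs : forall n, F (fs n) > INR n).
  { intro n. unfold fs. destruct (constructive_indefinite_description _ _); simpl; auto. }
  set (g := fun m => S (sumk fs m m)).
  assert (Hg : forall n, F g > INR n).
  { intro n. specialize (Hfs n).
    assert (F g > F (fs n)).
    { apply H1. exists n. intros m Hm. unfold g. pose proof (sumk_ge fs m m n). lia. }
    lra. }
  destruct (INR_unbounded (F g)) as [n Hn]. specialize (Hg n). lra.
Qed.
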